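(* Let $k\in\{1,2\}$, $\xi\in\mathbb{C}$, $f:\mathbb{N}\to[0,\infty)$, and $A=\xi(a^\dagger)^k+\xi^*a^k+f(a^\dagger a)$ with domain $\mathcal{D}_0$. Suppose there exist $C>0$ and $N\in\mathbb{N}$ such that $f(n)\le Cn^{k/2}$ for all $n\ge N$. Then $A$ is essentially self-adjoint.
   Context: $\mathbb{N}=\{0,1,2,\dots\}$. $\mathcal{H}$ is a separable complex Hilbert space with orthonormal basis $(\phi_n)_{n\in\mathbb{N}}$; $\mathcal{D}_0$ is the set of finite linear combinations of the $\phi_n$. The operators $a,a^\dagger$ have domain $\mathcal{D}_0$ and act by $a\phi_n=\sqrt{n}\,\phi_{n-1}$ ($a\phi_0=0$), $a^\dagger\phi_n=\sqrt{n+1}\,\phi_{n+1}$, extended linearly. $f(a^\dagger a)$ has domain $\mathcal{D}_0$ and $f(a^\dagger a)\phi_n=f(n)\phi_n$. *)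

(* Defs.v *)
(* concrete reals R, Coquelicot complex numbers C = R * R.
   The Hilbert space H is realised as l^2(N; C) with orthonormal basis
   phi_n = indicator of n.  Operators are represented by their graphs. *)
From Stdlib Require Import Reals.
From Coquelicot Require Import Coquelicot.
Open Scope R_scope.

Definition vec := nat -> C.

Definition l2 (u : vec) : Prop := ex_series (fun n => Cmod (u n) ^ 2).

Definition inner (u v : vec) : C :=
  (Series (fun n => fst (Cmult (Cconj (u n)) (v n))),
   Series (fun n => snd (Cmult (Cconj (u n)) (v n)))).

Definition hnorm (u : vec) : R := sqrt (Series (fun n => Cmod (u n) ^ 2)).

Definition vsub (u v : vec) : vec := fun n => Cminus (u n) (v n).

(* D_0 : finite linear combinations of the phi_n = finitely supported sequences *)
Definition D0 (u : vec) : Prop := exists M : nat, forall n, (M <= n)%nat -> u n = RtoC 0.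

Definition phi (n : nat) : vec := fun m => if Nat.eqb m n then RtoC 1 else RtoC 0.

(* a phi_n = sqrt n phi_{n-1}:  (a u)(m) = sqrt(m+1) u(m+1) *)
Definition ann (u : vec) : vec := fun m => Cmult (RtoC (sqrt (INR (S m)))) (u (S m)).
(* a^dagger phi_n = sqrt(n+1) phi_{n+1} *)
Definition cre (u : vec) : vec := fun m =>
  match m with O => RtoC 0 | S p => Cmult (RtoC (sqrt (INR (S p)))) (u p) end.
(* f(a^dagger a) phi_n = f(n) phi_n *)
Definition fnum (f : nat -> R) (u : vec) : vec := fun m => Cmult (RtoC (f m)) (u m).

Definition op := vec -> vec -> Prop.

Definition opA (k : nat) (xi : C) (f : nat -> R) : op := fun u v =>
  D0 u /\ forall n, v n =
    Cplus (Cplus (Cmult xi (Nat.iter k cre u n))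
                 (Cmult (Cconj xi) (Nat.iter k ann u n)))
          (fnum f u n).

Definition closure (T : op) : op := fun u v =>
  l2 u /\ l2 v /\
  exists (us vs : nat -> vec),
    (forall j, T (us j) (vs j)) /\
    is_lim_seq (fun j => hnorm (vsub (us j) u)) 0 /\
    is_lim_seq (fun j => hnorm (vsub (vs j) v)) 0.

Definition adjoint (T : op) : op := fun v w =>
  l2 v /\ l2 w /\ forall u z, T u z -> inner v z = inner w u.

Definition self_adjoint (T : op) : Prop := forall u v, T u v <-> adjoint T u v.

Definition essentially_self_adjoint (T : op) : Prop := self_adjoint (closure T).

(* Main.v *)
Require Import Defs.
From Stdlib Require Import Reals Lra Lia.
From Coquelicot Require Import Coquelicot.
Open Scope R_scope.

Lemma exR_le (a b : nat -> R) : (forall n, 0 <= a n <= b n) -> ex_series b -> ex_series a.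
Proof.
  intros H Hb. apply (@ex_series_le R_AbsRing R_CompleteNormedModule) with b; auto.
  intros n. change norm with Rabs. simpl. rewrite Rabs_pos_eq; apply H.
Qed.

Lemma ex_series_zero : ex_series (fun _ : nat => 0).
Proof.
  exists 0. change (is_lim_seq (sum_n (fun _ : nat => 0)) 0).
  apply is_lim_seq_ext with (fun _ => 0).
  intros n. rewrite sum_n_const. ring.
  apply is_lim_seq_const.
Qed.

Lemma Series_zero : Series (fun _ : nat => 0) = 0.
Proof.
  rewrite <- (Series_ext (fun n => 0 * 0)). rewrite Series_scal_l. ring.
  intros; ring.
Qed.

Lemma ex_series_fin (a : nat -> R) (M : nat) :
  (forall n, (M <= n)%nat -> a n = 0) -> ex_series a.
Proof.
  intros H. apply (ex_series_incr_n a M).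
  apply ex_series_ext with (fun _ => 0). intros n. rewrite H; auto; lia.
  apply ex_series_zero.
Qed.

Lemma Series_nonneg (a : nat -> R) : (forall n, 0 <= a n) -> ex_series a -> 0 <= Series a.
Proof.
  intros H1 H2. rewrite <- Series_zero. apply Series_le; auto.
  intros n; split; [lra| auto].
Qed.

Lemma Series_delta (n : nat) (c : R) :
  Series (fun m => if Nat.eqb m n then c else 0) = c.
Proof.
  rewrite (Series_incr_n_aux _ n).
  2:{ intros k Hk. destruct (Nat.eqb_spec k n); [lia|auto]. }
  rewrite Series_incr_1.
  - replace (n + 0)%nat with n by lia. rewrite Nat.eqb_refl.
    rewrite (Series_ext _ (fun _ => 0)). rewrite Series_zero. ring.
    intros k. destruct (Nat.eqb_spec (n + S k) n); [lia|auto].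
  - apply ex_series_fin with 1%nat. intros k Hk.
    destruct (Nat.eqb_spec (n + k) n); [lia|auto].
Qed.

Lemma tail_lim (a : nat -> R) : ex_series a ->
  is_lim_seq (fun j => Series (fun k => a (j + k)%nat)) 0.
Proof.
  intros Ha. apply is_lim_seq_incr_1.
  apply is_lim_seq_ext with (fun j => Series a - sum_n a j).
  - intros j. rewrite (Series_incr_n a (S j)); [|lia|auto].
    rewrite <- sum_n_Reals. simpl pred. ring.
  - replace 0 with (Series a - Series a) by ring.
    apply is_lim_seq_minus'. apply is_lim_seq_const.
    apply Series_correct in Ha. exact Ha.
Qed.

Lemma dom_lim (s : nat -> nat -> R) (w : nat -> R) :
  ex_series w -> (forall j n, 0 <= s j n <= w n) ->
  (forall j n, (n < j)%nat -> s j n = 0) ->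
  is_lim_seq (fun j => Series (s j)) 0.
Proof.
  intros Hw H1 H2.
  apply is_lim_seq_le_le with (fun _ => 0) (fun j => Series (fun k => w (j + k)%nat)).
  - intros j. rewrite (Series_incr_n_aux (s j) j) by auto. split.
    + apply Series_nonneg. intros; apply H1.
      apply exR_le with (fun k => w (j + k)%nat).
      intros k. apply H1.
      apply (ex_series_incr_n w j). auto.
    + apply Series_le. intros; apply H1. apply (ex_series_incr_n w j). auto.
  - apply is_lim_seq_const.
  - apply tail_lim; auto.
Qed.

Lemma lim_sqrt0 (u : nat -> R) : is_lim_seq u 0 -> is_lim_seq (fun n => sqrt (u n)) 0.
Proof.
  intros H. rewrite <- sqrt_0.
  apply (filterlim_comp _ _ _ u sqrt eventually (locally 0)). exact H. apply continuous_sqrt.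
Qed.

Lemma lim_sq0 (u : nat -> R) : (forall n, 0 <= u n) ->
  is_lim_seq (fun n => sqrt (u n)) 0 -> is_lim_seq u 0.
Proof.
  intros Hp H. apply is_lim_seq_ext with (fun n => sqrt (u n) * sqrt (u n)).
  intros n. apply sqrt_sqrt; auto.
  replace 0 with (0 * 0) by ring. apply is_lim_seq_mult'; auto.
Qed.

Lemma sq_nonneg (z : C) : 0 <= Cmod z ^ 2.
Proof. pose proof (Cmod_ge_0 z). nra. Qed.

Lemma Cmod_sub_sq (a b : C) : Cmod (Cminus a b) ^ 2 <= 2 * Cmod a ^ 2 + 2 * Cmod b ^ 2.
Proof.
  pose proof (Cmod_triangle a (Copp b)). rewrite Cmod_opp in H.
  pose proof (Cmod_ge_0 (Cminus a b)). pose proof (Cmod_ge_0 a). pose proof (Cmod_ge_0 b).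
  unfold Cminus in *. set (x := Cmod (a + - b)%C) in *.
  assert (x ^ 2 <= (Cmod a + Cmod b) ^ 2) by (apply pow_incr; lra).
  pose proof (pow2_ge_0 (Cmod a - Cmod b)). nra.
Qed.

Lemma l2_sub u v : l2 u -> l2 v -> l2 (vsub u v).
Proof.
  intros Hu Hv. unfold l2, vsub.
  apply exR_le with (fun n => 2 * Cmod (u n) ^ 2 + 2 * Cmod (v n) ^ 2).
  intros n; split; [apply sq_nonneg| apply Cmod_sub_sq].
  apply (ex_series_plus (fun n => 2 * Cmod (u n) ^ 2) (fun n => 2 * Cmod (v n) ^ 2)).
  apply (ex_series_scal_l 2 (fun n => Cmod (u n) ^ 2)); auto.
  apply (ex_series_scal_l 2 (fun n => Cmod (v n) ^ 2)); auto.
Qed.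

Lemma l2_D0 u : D0 u -> l2 u.
Proof.
  intros [M HM]. apply ex_series_fin with M. intros n Hn. rewrite HM; auto.
  rewrite Cmod_0. ring.
Qed.

Lemma Cmod_le_hnorm u n : l2 u -> Cmod (u n) <= hnorm u.
Proof.
  intros Hu. unfold hnorm. rewrite <- (sqrt_pow2 (Cmod (u n))) by apply Cmod_ge_0.
  apply sqrt_le_1_alt.
  rewrite <- (Series_delta n (Cmod (u n) ^ 2)).
  apply Series_le; auto. intros m. destruct (Nat.eqb_spec m n).
  subst; split; [apply sq_nonneg| lra]. split; [lra|apply sq_nonneg].
Qed.

Definition conv (ys : nat -> vec) (y : vec) :=
  forall m, is_lim_seq (fun j => Cmod (Cminus (ys j m) (y m))) 0.

Lemma conv_of_hnorm (ys : nat -> vec) y :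
  (forall j, l2 (ys j)) -> l2 y ->
  is_lim_seq (fun j => hnorm (vsub (ys j) y)) 0 -> conv ys y.
Proof.
  intros H1 H2 H3 m.
  apply is_lim_seq_le_le with (fun _ => 0) (fun j => hnorm (vsub (ys j) y)); auto.
  intros j; split. apply Cmod_ge_0.
  apply (Cmod_le_hnorm (vsub (ys j) y) m). apply l2_sub; auto.
  apply is_lim_seq_const.
Qed.

Lemma conv_scal (a b : nat -> C) (c : C) :
  (forall j, b j = Cmult c (a j)) ->
  is_lim_seq (fun j => Cmod (a j)) 0 ->
  is_lim_seq (fun j => Cmod (b j)) 0.
Proof.
  intros H1 H2. apply is_lim_seq_ext with (fun j => Cmod c * Cmod (a j)).
  intros j. rewrite H1, Cmod_mult. auto.
  replace 0 with (Cmod c * 0) by ring. apply is_lim_seq_mult'; auto. apply is_lim_seq_const.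
Qed.

Lemma conv_cre ys y : conv ys y -> conv (fun j => cre (ys j)) (cre y).
Proof.
  intros H [|p].
  - simpl. apply is_lim_seq_ext with (fun _ => 0). intros j.
    replace (Cminus (RtoC 0) (RtoC 0)) with (RtoC 0) by ring. rewrite Cmod_0. auto.
    apply is_lim_seq_const.
  - apply conv_scal with (c := RtoC (sqrt (INR (S p)))) (a := fun j => Cminus (ys j p) (y p)); auto.
    intros j; simpl. ring.
Qed.

Lemma conv_ann ys y : conv ys y -> conv (fun j => ann (ys j)) (ann y).
Proof.
  intros H m.
  apply conv_scal with (c := RtoC (sqrt (INR (S m)))) (a := fun j => Cminus (ys j (S m)) (y (S m))); auto.
  intros j; unfold ann. ring.
Qed.

Definition Aform (k : nat) (xi : C) (f : nat -> R) (u : vec) : vec := fun n =>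
  Cplus (Cplus (Cmult xi (Nat.iter k cre u n))
               (Cmult (Cconj xi) (Nat.iter k ann u n)))
        (fnum f u n).

Lemma lim_add (a b c : nat -> C) :
  (forall j, c j = Cplus (a j) (b j)) ->
  is_lim_seq (fun j => Cmod (a j)) 0 -> is_lim_seq (fun j => Cmod (b j)) 0 ->
  is_lim_seq (fun j => Cmod (c j)) 0.
Proof.
  intros H Ha Hb.
  apply is_lim_seq_le_le with (fun _ => 0) (fun j => Cmod (a j) + Cmod (b j)).
  intros j; split. apply Cmod_ge_0. rewrite H. apply Cmod_triangle.
  apply is_lim_seq_const.
  replace 0 with (0 + 0) by ring. apply is_lim_seq_plus'; auto.
Qed.

Lemma conv_iter (g : vec -> vec) k :
  (forall ys y, conv ys y -> conv (fun j => g (ys j)) (g y)) ->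
  forall ys y, conv ys y -> conv (fun j => Nat.iter k g (ys j)) (Nat.iter k g y).
Proof.
  intros Hg. induction k as [|k IH]; intros ys y H; simpl; auto.
Qed.

Lemma conv_Aform k xi f ys y : conv ys y ->
  conv (fun j => Aform k xi f (ys j)) (Aform k xi f y).
Proof.
  intros H n.
  pose proof (conv_iter cre k conv_cre ys y H n) as H1.
  pose proof (conv_iter ann k conv_ann ys y H n) as H2.
  eapply lim_add with
    (a := fun j => Cplus (Cmult xi (Cminus (Nat.iter k cre (ys j) n) (Nat.iter k cre y n)))
                         (Cmult (Cconj xi) (Cminus (Nat.iter k ann (ys j) n) (Nat.iter k ann y n))))
    (b := fun j => Cmult (RtoC (f n)) (Cminus (ys j n) (y n))).
  - intros j. unfold Aform, fnum. ring.
  - eapply lim_add. intros j; reflexivity.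
    eapply conv_scal. intros j; reflexivity. auto.
    eapply conv_scal. intros j; reflexivity. auto.
  - eapply conv_scal. intros j; reflexivity. apply H.
Qed.

Lemma Cmod0_eq (a b : C) : Cmod (Cminus a b) <= 0 -> a = b.
Proof.
  intros H. pose proof (Cmod_ge_0 (Cminus a b)).
  assert (Cminus a b = RtoC 0) by (apply Cmod_eq_0; lra).
  replace a with (Cplus (Cminus a b) b) by ring. rewrite H1. ring.
Qed.

Lemma D0_cre u : D0 u -> D0 (cre u).
Proof.
  intros [M HM]. exists (S M). intros [|n] Hn; simpl. auto.
  rewrite HM by lia. ring.
Qed.

Lemma D0_ann u : D0 u -> D0 (ann u).
Proof.
  intros [M HM]. exists M. intros n Hn; unfold ann.
  rewrite HM by lia. ring.
Qed.

Lemma D0_iter g k u : (forall x, D0 x -> D0 (g x)) -> D0 u -> D0 (Nat.iter k g u).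
Proof.
  intros Hg Hu. induction k; simpl; auto.
Qed.

Lemma D0_Aform k xi f u : D0 u -> D0 (Aform k xi f u).
Proof.
  intros Hu.
  destruct (D0_iter cre k u D0_cre Hu) as [M1 H1].
  destruct (D0_iter ann k u D0_ann Hu) as [M2 H2].
  destruct Hu as [M3 H3].
  exists (M1 + M2 + M3)%nat. intros n Hn. unfold Aform, fnum.
  rewrite H1, H2, H3 by lia. ring.
Qed.

Lemma const_le_lim (c : R) (s : nat -> R) : (forall j, c <= s j) -> is_lim_seq s 0 -> c <= 0.
Proof.
  intros H1 H2. apply (is_lim_seq_le (fun _ => c) s c 0); auto. apply is_lim_seq_const.
Qed.

Lemma closure_F k xi f u v : closure (opA k xi f) u v ->
  l2 u /\ l2 v /\ forall n, v n = Aform k xi f u n.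
Proof.
  intros [Hu [Hv [us [vs [Hop [H1 H2]]]]]].
  split; auto. split; auto.
  assert (Hus : forall j, D0 (us j)) by (intros j; apply Hop).
  assert (Hvs : forall j n, vs j n = Aform k xi f (us j) n) by (intros j; apply Hop).
  assert (Cu : conv us u) by (apply conv_of_hnorm; auto; intros j; apply l2_D0; auto).
  assert (Cv : conv vs v).
  { apply conv_of_hnorm; auto. intros j. apply l2_D0.
    destruct (D0_Aform k xi f (us j) (Hus j)) as [M HM]. exists M.
    intros n Hn. rewrite Hvs. auto. }
  intros n. apply Cmod0_eq.
  apply const_le_lim with (fun j => Cmod (Cminus (vs j n) (v n)) +
     Cmod (Cminus (Aform k xi f (us j) n) (Aform k xi f u n))).
  - intros j. rewrite <- Cmod_opp with (x := Cminus (vs j n) (v n)).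
    eapply Rle_trans; [|apply Cmod_triangle]. right. f_equal. rewrite Hvs. ring.
  - replace 0 with (0 + 0) by ring. apply is_lim_seq_plus'. apply Cv. apply conv_Aform; auto.
Qed.

Definition CS (s : nat -> C) : C := (Series (fun n => fst (s n)), Series (fun n => snd (s n))).
Definition finC (s : nat -> C) := exists M, forall n, (M <= n)%nat -> s n = RtoC 0.

Lemma inner_CS u v : inner u v = CS (fun n => Cmult (Cconj (u n)) (v n)).
Proof. reflexivity. Qed.

Lemma finC_fst s : finC s -> ex_series (fun n => fst (s n)).
Proof. intros [M HM]. apply ex_series_fin with M. intros n Hn. rewrite HM; auto. Qed.
Lemma finC_snd s : finC s -> ex_series (fun n => snd (s n)).
Proof. intros [M HM]. apply ex_series_fin with M. intros n Hn. rewrite HM; auto. Qed.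

Lemma exR_scal (c : R) (a : nat -> R) : ex_series a -> ex_series (fun n => c * a n).
Proof. intros H. exact (@ex_series_scal_l R_AbsRing R_NormedModule c a H). Qed.

Lemma CS_ext s t : (forall n, s n = t n) -> CS s = CS t.
Proof.
  intros H. unfold CS. f_equal; apply Series_ext; intros n; rewrite H; auto.
Qed.

Lemma CS_plus s t : finC s -> finC t -> CS (fun n => Cplus (s n) (t n)) = Cplus (CS s) (CS t).
Proof.
  intros Hs Ht. unfold CS, Cplus. simpl. f_equal.
  - rewrite <- Series_plus by (apply finC_fst; auto). apply Series_ext; auto.
  - rewrite <- Series_plus by (apply finC_snd; auto). apply Series_ext; auto.
Qed.

Lemma CS_scal c s : finC s -> CS (fun n => Cmult c (s n)) = Cmult c (CS s).
Proof.
  intros Hs. destruct c as [a b]. unfold CS, Cmult. simpl. f_equal.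
  - rewrite <- !Series_scal_l. rewrite <- Series_minus.
    apply Series_ext; auto.
    apply (exR_scal a); apply finC_fst; auto.
    apply (exR_scal b); apply finC_snd; auto.
  - rewrite <- !Series_scal_l. rewrite <- Series_plus.
    apply Series_ext; auto.
    apply (exR_scal a); apply finC_snd; auto.
    apply (exR_scal b); apply finC_fst; auto.
Qed.

Lemma finC_D0 (u x : vec) : D0 x -> finC (fun n => Cmult (u n) (x n)).
Proof. intros [M HM]. exists M. intros n Hn. rewrite HM; auto. ring. Qed.

Lemma Cconj_R r : Cconj (RtoC r) = RtoC r.
Proof. unfold Cconj, RtoC. simpl. f_equal. ring. Qed.

Lemma Series_incr_1C (s : nat -> C) : finC s ->
  CS s = Cplus (s O) (CS (fun n => s (S n))).
Proof.
  intros Hs. unfold CS, Cplus. simpl.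
  rewrite (Series_incr_1 (fun n => fst (s n))) by (apply finC_fst; auto).
  rewrite (Series_incr_1 (fun n => snd (s n))) by (apply finC_snd; auto).
  destruct (s O); reflexivity.
Qed.

Lemma pair_cre u x : D0 x -> inner u (cre x) = inner (ann u) x.
Proof.
  intros Hx. rewrite !inner_CS.
  rewrite Series_incr_1C by (apply finC_D0, D0_cre; auto).
  cbn [cre]. unfold ann. rewrite Cmult_0_r, Cplus_0_l.
  apply CS_ext. intros n. rewrite Cmult_conj, Cconj_R. ring.
Qed.

Lemma pair_ann u x : D0 x -> inner u (ann x) = inner (cre u) x.
Proof.
  intros Hx. rewrite !inner_CS.
  rewrite (Series_incr_1C (fun n => Cmult (Cconj (cre u n)) (x n))).
  2:{ apply finC_D0; auto. }
  cbn [cre]. rewrite Cconj_R, Cmult_0_l, Cplus_0_l.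
  apply CS_ext. intros n. unfold ann. rewrite Cmult_conj, Cconj_R. ring.
Qed.

Lemma pair_iter_cre k u x : D0 x -> inner u (Nat.iter k cre x) = inner (Nat.iter k ann u) x.
Proof.
  revert u. induction k as [|k IH]; intros u Hx; simpl; auto.
  rewrite pair_cre by (apply D0_iter; auto; apply D0_cre).
  rewrite IH by auto. rewrite Nat.iter_swap. auto.
Qed.

Lemma pair_iter_ann k u x : D0 x -> inner u (Nat.iter k ann x) = inner (Nat.iter k cre u) x.
Proof.
  revert u. induction k as [|k IH]; intros u Hx; simpl; auto.
  rewrite pair_ann by (apply D0_iter; auto; apply D0_ann).
  rewrite IH by auto. rewrite Nat.iter_swap. auto.
Qed.

Lemma pair_Aform k xi f u x : D0 x ->
  inner u (Aform k xi f x) = inner (Aform k xi f u) x.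
Proof.
  intros Hx. rewrite !inner_CS.
  pose proof (D0_iter cre k x D0_cre Hx) as Hc.
  pose proof (D0_iter ann k x D0_ann Hx) as Ha.
  rewrite (CS_ext _ (fun n => Cplus (Cplus (Cmult xi (Cmult (Cconj (u n)) (Nat.iter k cre x n)))
      (Cmult (Cconj xi) (Cmult (Cconj (u n)) (Nat.iter k ann x n))))
      (Cmult (Cconj (fnum f u n)) (x n)))).
  2:{ intros n. unfold Aform, fnum. rewrite Cmult_conj, Cconj_R. ring. }
  rewrite (CS_ext (fun n => Cmult (Cconj (Aform k xi f u n)) (x n))
     (fun n => Cplus (Cplus (Cmult (Cconj xi) (Cmult (Cconj (Nat.iter k cre u n)) (x n)))
      (Cmult xi (Cmult (Cconj (Nat.iter k ann u n)) (x n))))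
      (Cmult (Cconj (fnum f u n)) (x n)))).
  2:{ intros n. unfold Aform. rewrite !Cplus_conj, !Cmult_conj, Cconj_conj. ring. }
  assert (F1 : forall (c : C) (w : vec) (y : vec), D0 y -> finC (fun n => Cmult c (Cmult (w n) (y n)))).
  { intros c w y [M HM]. exists M. intros n Hn. rewrite HM; auto. ring. }
  assert (F2 : forall (w : vec) (y : vec), D0 y -> finC (fun n => Cmult (w n) (y n))).
  { intros w y [M HM]. exists M. intros n Hn. rewrite HM; auto. ring. }
  assert (F3 : forall s t, finC s -> finC t -> finC (fun n => Cplus (s n) (t n))).
  { intros s t [M HM] [N HN]. exists (M + N)%nat. intros n Hn. rewrite HM, HN by lia. ring. }
  rewrite !CS_plus; auto.
  rewrite !CS_scal; auto.
  rewrite <- !inner_CS.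
  rewrite pair_iter_cre, pair_iter_ann by auto. ring.
Qed.

Lemma im_le_Cmod (c : C) : Rabs (snd c) <= Cmod c.
Proof.
  pose proof (Cmod2_alt c). pose proof (Cmod_ge_0 c). unfold Im, Re in *.
  pose proof (pow2_ge_0 (fst c)).
  destruct (Rabs_pos (snd c)).
  - apply Rsqr_incr_0_var; auto. unfold Rsqr. rewrite <- Rabs_mult, Rabs_pos_eq by nra. nra.
  - lra.
Qed.

Lemma exR_abs_le (a b : nat -> R) : (forall n, Rabs (a n) <= b n) -> ex_series b -> ex_series a.
Proof.
  intros H Hb. apply (@ex_series_le R_AbsRing R_CompleteNormedModule) with b; auto.
Qed.

Lemma amgm (t x y : R) : 0 < t -> x * y <= t / 2 * x ^ 2 + / (2 * t) * y ^ 2.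
Proof.
  intros Ht. pose proof (pow2_ge_0 (t * x - y)).
  assert (t * (x * y) <= t * (t / 2 * x ^ 2 + / (2 * t) * y ^ 2)).
  { replace (t * (t / 2 * x ^ 2 + / (2 * t) * y ^ 2)) with (t ^ 2 / 2 * x ^ 2 + y ^ 2 / 2)
      by (field; lra). nra. }
  apply Rmult_le_reg_l with t; auto.
Qed.

Definition sn (u : vec) := Series (fun n => Cmod (u n) ^ 2).

Lemma inner_cont_p (p : C -> R) (a z : vec) (zs : nat -> vec) :
  (forall c, Rabs (p c) <= Cmod c) ->
  (forall x y w, p (Cmult x (Cminus y w)) = p (Cmult x y) - p (Cmult x w)) ->
  l2 a -> l2 z -> (forall i, l2 (zs i)) ->
  is_lim_seq (fun i => hnorm (vsub (zs i) z)) 0 ->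
  is_lim_seq (fun i => Series (fun n => p (Cmult (Cconj (a n)) (zs i n))))
             (Series (fun n => p (Cmult (Cconj (a n)) (z n)))).
Proof.
  intros Hp Hlin Ha Hz Hzs Hlim.
  assert (Hd : forall i, l2 (vsub (zs i) z)) by (intros; apply l2_sub; auto).
  assert (Sn : is_lim_seq (fun i => sn (vsub (zs i) z)) 0).
  { apply lim_sq0. intros i. apply Series_nonneg. intros; apply sq_nonneg. apply Hd. exact Hlim. }
  assert (Bd : forall t (w : vec), 0 < t -> forall n,
      Rabs (p (Cmult (Cconj (a n)) (w n))) <= t / 2 * Cmod (a n) ^ 2 + / (2 * t) * Cmod (w n) ^ 2).
  { intros t w Ht n. eapply Rle_trans. apply Hp. rewrite Cmod_mult, Cmod_conj. apply amgm; auto. }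
  assert (Ex : forall w : vec, l2 w -> ex_series (fun n => p (Cmult (Cconj (a n)) (w n)))).
  { intros w Hw. apply exR_abs_le with (fun n => 1 / 2 * Cmod (a n) ^ 2 + / (2 * 1) * Cmod (w n) ^ 2).
    intros n. apply Bd. lra.
    apply (ex_series_plus (fun n => 1 / 2 * Cmod (a n) ^ 2) (fun n => / (2 * 1) * Cmod (w n) ^ 2)).
    apply exR_scal; auto. apply exR_scal; auto. }
  assert (Exa : forall w : vec, l2 w -> ex_series (fun n => Rabs (p (Cmult (Cconj (a n)) (w n))))).
  { intros w Hw. apply exR_le with (fun n => 1 / 2 * Cmod (a n) ^ 2 + / (2 * 1) * Cmod (w n) ^ 2).
    intros n. split. apply Rabs_pos. apply Bd. lra.
    apply (ex_series_plus (fun n => 1 / 2 * Cmod (a n) ^ 2) (fun n => / (2 * 1) * Cmod (w n) ^ 2)).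
    apply exR_scal; auto. apply exR_scal; auto. }
  assert (Key : forall t i, 0 < t ->
    Rabs (Series (fun n => p (Cmult (Cconj (a n)) (zs i n))) - Series (fun n => p (Cmult (Cconj (a n)) (z n))))
    <= t / 2 * sn a + / (2 * t) * sn (vsub (zs i) z)).
  { intros t i Ht. rewrite <- Series_minus by auto.
    rewrite (Series_ext _ (fun n => p (Cmult (Cconj (a n)) (vsub (zs i) z n)))).
    2:{ intros n. unfold vsub. rewrite Hlin. auto. }
    eapply Rle_trans. apply Series_Rabs. apply Exa; auto.
    unfold sn. rewrite <- !Series_scal_l. rewrite <- Series_plus.
    apply Series_le. intros n; split. apply Rabs_pos. apply Bd; auto.
    apply (ex_series_plus (fun n => t / 2 * Cmod (a n) ^ 2) (fun n => / (2 * t) * Cmod (vsub (zs i) z n) ^ 2)).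
    all: try (apply exR_scal; first [apply Ha | apply Hd]). }
  assert (San : 0 <= sn a) by (apply Series_nonneg; auto; intros; apply sq_nonneg).
  apply is_lim_seq_spec. intros eps.
  set (t := eps / (sn a + 1)).
  assert (Ht : 0 < t) by (unfold t; apply Rdiv_lt_0_compat; [apply cond_pos| lra]).
  apply is_lim_seq_spec in Sn.
  assert (He : 0 < eps * t) by (apply Rmult_lt_0_compat; auto; apply cond_pos).
  destruct (Sn (mkposreal _ He)) as [N HN]. exists N. intros i Hi.
  specialize (HN i Hi). simpl in HN. rewrite Rminus_0_r in HN.
  eapply Rle_lt_trans. apply (Key t i Ht).
  pose proof (Rle_abs (sn (vsub (zs i) z))).
  assert (t / 2 * sn a < eps / 2).
  { unfold t. apply Rmult_lt_reg_r with (2 * (sn a + 1)). lra.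
    field_simplify; try lra. pose proof (cond_pos eps). nra. }
  assert (/ (2 * t) * sn (vsub (zs i) z) <= eps / 2).
  { apply Rmult_le_reg_l with (2 * t). lra.
    field_simplify; try lra. }
  lra.
Qed.

Lemma inner_cont (a z : vec) (zs : nat -> vec) :
  l2 a -> l2 z -> (forall i, l2 (zs i)) ->
  is_lim_seq (fun i => hnorm (vsub (zs i) z)) 0 ->
  is_lim_seq (fun i => fst (inner a (zs i))) (fst (inner a z)) /\
  is_lim_seq (fun i => snd (inner a (zs i))) (snd (inner a z)).
Proof.
  intros. split; unfold inner; simpl.
  - apply (inner_cont_p fst); auto. apply re_le_Cmod.
    intros [] [] []; simpl; ring.
  - apply (inner_cont_p snd); auto. apply im_le_Cmod.
    intros [] [] []; simpl; ring.
Qed.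

Lemma inner_ext_r u z z' : (forall n, z n = z' n) -> inner u z = inner u z'.
Proof. intros H. rewrite !inner_CS. apply CS_ext. intros n; rewrite H; auto. Qed.
Lemma inner_ext_l u u' z : (forall n, u n = u' n) -> inner u z = inner u' z.
Proof. intros H. rewrite !inner_CS. apply CS_ext. intros n; rewrite H; auto. Qed.

Lemma F_adj k xi f u v : closure (opA k xi f) u v -> adjoint (closure (opA k xi f)) u v.
Proof.
  intros Hc. destruct (closure_F _ _ _ _ _ Hc) as [Hu [Hv HA]].
  split; auto. split; auto.
  intros u' z' [Hu' [Hz' [us [vs [Hop [H1 H2]]]]]].
  assert (Hus : forall j, D0 (us j)) by (intros j; apply Hop).
  assert (Hvs : forall j n, vs j n = Aform k xi f (us j) n) by (intros j; apply Hop).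
  assert (E : forall i, inner u (vs i) = inner v (us i)).
  { intros i. rewrite (inner_ext_r _ _ _ (Hvs i)). rewrite pair_Aform by auto.
    apply inner_ext_l. intros n; rewrite HA; auto. }
  assert (Lvs : forall j, l2 (vs j)).
  { intros j. apply l2_D0. destruct (D0_Aform k xi f (us j) (Hus j)) as [M HM]. exists M.
    intros n Hn. rewrite Hvs. auto. }
  assert (Lus : forall j, l2 (us j)) by (intros; apply l2_D0; auto).
  destruct (inner_cont u z' vs Hu Hz' Lvs H2) as [A1 A2].
  destruct (inner_cont v u' us Hv Hu' Lus H1) as [B1 B2].
  apply injective_projections.
  - apply is_lim_seq_unique in A1. apply is_lim_seq_unique in B1.
    rewrite (Lim_seq_ext _ (fun i => fst (inner v (us i))) (fun i => f_equal fst (E i))) in A1. rewrite A1 in B1. injection B1. auto.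
  - apply is_lim_seq_unique in A2. apply is_lim_seq_unique in B2.
    rewrite (Lim_seq_ext _ (fun i => snd (inner v (us i))) (fun i => f_equal snd (E i))) in A2. rewrite A2 in B2. injection B2. auto.
Qed.

Lemma D0_phi n : D0 (phi n).
Proof. exists (S n). intros m Hm. unfold phi. destruct (Nat.eqb_spec m n); auto. lia. Qed.

Lemma inner_phi w n : inner w (phi n) = Cconj (w n).
Proof.
  unfold inner. apply injective_projections; simpl.
  - rewrite (Series_ext _ (fun m => if Nat.eqb m n then fst (Cconj (w n)) else 0)).
    apply Series_delta.
    intros m. unfold phi. destruct (Nat.eqb_spec m n). subst. destruct (w n); simpl; ring.
    destruct (w m); simpl; ring.
  - rewrite (Series_ext _ (fun m => if Nat.eqb m n then snd (Cconj (w n)) else 0)).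
    apply Series_delta.
    intros m. unfold phi. destruct (Nat.eqb_spec m n). subst. destruct (w n); simpl; ring.
    destruct (w m); simpl; ring.
Qed.

Lemma closure_self k xi f x : D0 x -> closure (opA k xi f) x (Aform k xi f x).
Proof.
  intros Hx. split. apply l2_D0; auto. split. apply l2_D0, D0_Aform; auto.
  exists (fun _ => x), (fun _ => Aform k xi f x). split.
  intros j. split; auto.
  assert (Z : forall y : vec, hnorm (vsub y y) = 0).
  { intros y. unfold hnorm. rewrite (Series_ext _ (fun _ => 0)). rewrite Series_zero. apply sqrt_0.
    intros n. unfold vsub. replace (Cminus (y n) (y n)) with (RtoC 0) by ring. rewrite Cmod_0. ring. }
  split; apply is_lim_seq_ext with (fun _ => 0); try (intros; rewrite Z; auto); apply is_lim_seq_const.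
Qed.

Lemma adj_F k xi f u v : adjoint (closure (opA k xi f)) u v ->
  l2 u /\ l2 v /\ forall n, v n = Aform k xi f u n.
Proof.
  intros [Hu [Hv H]]. split; auto. split; auto. intros n.
  specialize (H (phi n) (Aform k xi f (phi n)) (closure_self k xi f (phi n) (D0_phi n))).
  rewrite pair_Aform in H by apply D0_phi. rewrite !inner_phi in H.
  rewrite <- (Cconj_conj (v n)), <- H. apply Cconj_conj.
Qed.

Definition clip (x : R) := Rmin 1 (Rmax 0 x).
Definition chi (J n : nat) : R := clip (2 - INR n / INR J).

Lemma clip_bounds x : 0 <= clip x <= 1.
Proof. unfold clip, Rmin, Rmax. repeat destruct Rle_dec; lra. Qed.

Lemma clip_lip x y : Rabs (clip x - clip y) <= Rabs (x - y).
Proof. unfold clip, Rmin, Rmax. repeat destruct Rle_dec; unfold Rabs; repeat destruct Rcase_abs; lra. Qed.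

Lemma chi_one J n : (1 <= J)%nat -> (n <= J)%nat -> chi J n = 1.
Proof.
  intros HJ Hn. unfold chi, clip.
  assert (0 < INR J) by (apply lt_0_INR; lia).
  assert (INR n <= INR J) by (apply le_INR; auto).
  assert (INR n / INR J <= 1) by (apply Rmult_le_reg_r with (INR J); auto; field_simplify; lra).
  unfold Rmin, Rmax. repeat destruct Rle_dec; lra.
Qed.

Lemma chi_zero J n : (1 <= J)%nat -> (2 * J <= n)%nat -> chi J n = 0.
Proof.
  intros HJ Hn. unfold chi, clip.
  assert (0 < INR J) by (apply lt_0_INR; lia).
  assert (2 * INR J <= INR n) by (replace (2 * INR J) with (INR (2 * J)) by (rewrite mult_INR; simpl; ring); apply le_INR; auto).
  assert (2 <= INR n / INR J) by (apply Rmult_le_reg_r with (INR J); auto; field_simplify; lra).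
  unfold Rmin, Rmax. repeat destruct Rle_dec; lra.
Qed.

Lemma chi_lip J a b : (1 <= J)%nat -> (a <= b <= a + 2)%nat ->
  Rabs (chi J a - chi J b) <= 2 / INR J.
Proof.
  intros HJ Hab. unfold chi. eapply Rle_trans. apply clip_lip.
  assert (0 < INR J) by (apply lt_0_INR; lia).
  assert (INR a <= INR b <= INR a + 2).
  { split. apply le_INR; lia. replace 2 with (INR 2) by (simpl; ring). rewrite <- plus_INR. apply le_INR; lia. }
  replace (2 - INR a / INR J - (2 - INR b / INR J)) with ((INR b - INR a) / INR J) by (field; lra).
  rewrite Rabs_pos_eq. apply Rmult_le_reg_r with (INR J); auto; field_simplify; lra.
  apply Rdiv_le_0_compat; lra.
Qed.

Lemma comm_coef J a b c : (1 <= J)%nat -> (a <= b <= a + 2)%nat -> 0 <= c <= INR b ->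
  Rabs (c * (chi J a - chi J b)) <= 8 /\ ((b <= J)%nat -> c * (chi J a - chi J b) = 0).
Proof.
  intros HJ Hab Hc. split.
  - destruct (Compare_dec.le_lt_dec (2 * J) a) as [H|H].
    + rewrite !chi_zero by lia. rewrite Rminus_0_r, Rmult_0_r, Rabs_R0. lra.
    + assert (0 < INR J) by (apply lt_0_INR; lia).
      assert (INR b <= 2 * INR J + 2).
      { replace (2 * INR J + 2) with (INR (2 * J + 2)) by (rewrite plus_INR, mult_INR; simpl; ring).
        apply le_INR; lia. }
      assert (1 <= INR J) by (replace 1 with (INR 1) by auto; apply le_INR; auto).
      rewrite Rabs_mult, (Rabs_pos_eq c) by lra.
      pose proof (chi_lip J a b HJ Hab).
      apply Rle_trans with ((2 * INR J + 2) * (2 / INR J)).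
      apply Rmult_le_compat; [lra | apply Rabs_pos | lra | exact H3].
      apply Rmult_le_reg_r with (INR J); auto. field_simplify; lra.
  - intros Hb. rewrite !chi_one by lia. ring.
Qed.

Lemma Cmod_R_mult_sq (r : R) (x : C) : Rabs r <= 8 -> Cmod (Cmult (RtoC r) x) ^ 2 <= 64 * Cmod x ^ 2.
Proof.
  intros H. rewrite Cmod_mult, Cmod_R. pose proof (Cmod_ge_0 x). pose proof (Rabs_pos r).
  assert (Rabs r * Rabs r <= 64) by nra. nra.
Qed.

Lemma sqrt_le_id n : sqrt (INR (S n)) <= INR (S n).
Proof.
  assert (1 <= INR (S n)) by (replace 1 with (INR 1) by auto; apply le_INR; lia).
  rewrite <- (sqrt_square (INR (S n))) at 2 by lra.
  apply sqrt_le_1_alt. nra.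
Qed.

Lemma sqrt2_le n : sqrt (INR (S (S n))) * sqrt (INR (S n)) <= INR (S (S n)).
Proof.
  assert (INR (S n) <= INR (S (S n))) by (apply le_INR; lia).
  assert (0 <= INR (S n)) by apply pos_INR.
  rewrite <- sqrt_mult by lra.
  apply Rle_trans with (sqrt (INR (S (S n)) * INR (S (S n)))).
  apply sqrt_le_1_alt. nra. rewrite sqrt_square; lra.
Qed.

Definition cut (J : nat) (u : vec) : vec := fun n => Cmult (RtoC (chi J n)) (u n).

Definition W (u : vec) (n : nat) : R :=
  (match n with O => 0 | S p => Cmod (u p) ^ 2 end) +
  (match n with S (S q) => Cmod (u q) ^ 2 | _ => 0 end) +
  Cmod (u (S n)) ^ 2 + Cmod (u (S (S n))) ^ 2.

Lemma W_nonneg u n : 0 <= W u n.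
Proof.
  unfold W. destruct n as [|[|q]]; repeat apply Rplus_le_le_0_compat; try apply sq_nonneg; lra.
Qed.

Lemma W_ex u : l2 u -> ex_series (W u).
Proof.
  intros Hu. unfold l2 in Hu. unfold W.
  apply (ex_series_plus (fun n => _ + _ + _) (fun n => Cmod (u (S (S n))) ^ 2)).
  apply (ex_series_plus (fun n => _ + _) (fun n => Cmod (u (S n)) ^ 2)).
  apply (ex_series_plus (fun n => match n with O => 0 | S p => Cmod (u p) ^ 2 end)
                        (fun n => match n with S (S q) => Cmod (u q) ^ 2 | _ => 0 end)).
  - apply (ex_series_incr_1 (fun n => match n with O => 0 | S p => Cmod (u p) ^ 2 end)). exact Hu.
  - apply (ex_series_incr_n (fun n => match n with S (S q) => Cmod (u q) ^ 2 | _ => 0 end) 2). exact Hu.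
  - apply (ex_series_incr_1 (fun n => Cmod (u n) ^ 2)). exact Hu.
  - apply (ex_series_incr_n (fun n => Cmod (u n) ^ 2) 2). exact Hu.
Qed.

Lemma E_bound J a b c (x E : C) : (1 <= J)%nat -> (a <= b <= a + 2)%nat -> 0 <= c <= INR b ->
  (E = Cmult (RtoC c) (Cmult (Cminus (RtoC (chi J a)) (RtoC (chi J b))) x) \/
   E = Cmult (RtoC c) (Cmult (Cminus (RtoC (chi J b)) (RtoC (chi J a))) x)) ->
  Cmod E ^ 2 <= 64 * Cmod x ^ 2 /\ ((b <= J)%nat -> E = RtoC 0).
Proof.
  intros HJ Hab Hc HE.
  destruct (comm_coef J a b c HJ Hab Hc) as [B Z].
  assert (HE' : E = Cmult (RtoC (c * (chi J a - chi J b))) x \/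
                E = Cmult (RtoC (- (c * (chi J a - chi J b)))) x).
  { rewrite RtoC_opp, RtoC_mult, RtoC_minus. destruct HE as [-> | ->]; [left|right]; ring. }
  split.
  - destruct HE' as [-> | ->]; apply Cmod_R_mult_sq; auto. rewrite Rabs_Ropp; auto.
  - intros Hb. rewrite (Z Hb) in HE'. rewrite Ropp_0 in HE'. destruct HE' as [-> | ->]; ring.
Qed.

Ltac sqpos := repeat match goal with |- context [Cmod ?z ^ 2] =>
  lazymatch goal with H : 0 <= Cmod z ^ 2 |- _ => fail | _ => pose proof (sq_nonneg z) end end.

Lemma le_W1 u p : Cmod (u p) ^ 2 <= W u (S p).
Proof. unfold W. destruct p; sqpos; lra. Qed.
Lemma le_W2 u q : Cmod (u q) ^ 2 <= W u (S (S q)).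
Proof. unfold W. sqpos; lra. Qed.
Lemma le_W3 u n : Cmod (u (S n)) ^ 2 <= W u n.
Proof. unfold W. destruct n as [|[|q]]; sqpos; lra. Qed.
Lemma le_W4 u n : Cmod (u (S (S n))) ^ 2 <= W u n.
Proof. unfold W. destruct n as [|[|q]]; sqpos; lra. Qed.

Lemma iter1 (g : vec -> vec) x : Nat.iter 1 g x = g x.
Proof. reflexivity. Qed.
Lemma iter2 (g : vec -> vec) x : Nat.iter 2 g x = g (g x).
Proof. reflexivity. Qed.

Lemma comm_G k J u n : (k = 1 \/ k = 2)%nat -> (1 <= J)%nat ->
  let E := Cminus (Nat.iter k cre (cut J u) n) (Cmult (RtoC (chi J n)) (Nat.iter k cre u n)) in
  Cmod E ^ 2 <= 64 * W u n /\ ((n + 2 <= J)%nat -> E = RtoC 0).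
Proof.
  intros Hk HJ. pose proof (W_nonneg u n) as Wn.
  destruct Hk as [-> | ->]; rewrite ?iter1, ?iter2; intros E.
  - destruct n as [|p].
    + assert (E = RtoC 0) by (unfold E; cbn [cre]; ring). rewrite H, Cmod_0. split; [lra| auto].
    + destruct (E_bound J p (S p) (sqrt (INR (S p))) (u p) E HJ ltac:(lia)) as [B Z].
      split. apply sqrt_pos. apply sqrt_le_id.
      left. unfold E, cut. cbn [cre]. ring.
      split. pose proof (le_W1 u p). lra. intros; apply Z; lia.
  - destruct n as [|[|q]].
    + assert (E = RtoC 0) by (unfold E; cbn [cre]; ring). rewrite H, Cmod_0. split; [lra| auto].
    + assert (E = RtoC 0) by (unfold E; cbn [cre]; ring). rewrite H, Cmod_0. split; [lra| auto].
    + destruct (E_bound J q (S (S q)) (sqrt (INR (S (S q))) * sqrt (INR (S q))) (u q) E HJ ltac:(lia)) as [B Z].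
      split. apply Rmult_le_pos; apply sqrt_pos. apply sqrt2_le.
      left. unfold E, cut. cbn [cre]. rewrite RtoC_mult. ring.
      split. pose proof (le_W2 u q). lra. intros; apply Z; lia.
Qed.

Lemma comm_H k J u n : (k = 1 \/ k = 2)%nat -> (1 <= J)%nat ->
  let E := Cminus (Nat.iter k ann (cut J u) n) (Cmult (RtoC (chi J n)) (Nat.iter k ann u n)) in
  Cmod E ^ 2 <= 64 * W u n /\ ((n + 2 <= J)%nat -> E = RtoC 0).
Proof.
  intros Hk HJ. pose proof (W_nonneg u n) as Wn.
  destruct Hk as [-> | ->]; rewrite ?iter1, ?iter2; intros E.
  - destruct (E_bound J n (S n) (sqrt (INR (S n))) (u (S n)) E HJ ltac:(lia)) as [B Z].
    split. apply sqrt_pos. apply sqrt_le_id.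
    right. unfold E, cut, ann. ring.
    split. pose proof (le_W3 u n). lra. intros; apply Z; lia.
  - destruct (E_bound J n (S (S n)) (sqrt (INR (S (S n))) * sqrt (INR (S n))) (u (S (S n))) E HJ ltac:(lia)) as [B Z].
    split. apply Rmult_le_pos; apply sqrt_pos. apply sqrt2_le.
    right. unfold E, cut, ann. rewrite RtoC_mult. ring.
    split. pose proof (le_W4 u n). lra. intros; apply Z; lia.
Qed.

Lemma Cmod3 (a b c : C) : Cmod (Cplus (Cplus a b) c) ^ 2 <= 3 * (Cmod a ^ 2 + Cmod b ^ 2 + Cmod c ^ 2).
Proof.
  pose proof (Cmod_triangle (Cplus a b) c). pose proof (Cmod_triangle a b).
  pose proof (Cmod_ge_0 a). pose proof (Cmod_ge_0 b). pose proof (Cmod_ge_0 c).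
  pose proof (Cmod_ge_0 (Cplus (Cplus a b) c)).
  set (s := Cmod (Cplus (Cplus a b) c)) in *.
  assert (s <= Cmod a + Cmod b + Cmod c) by lra.
  assert (s ^ 2 <= (Cmod a + Cmod b + Cmod c) ^ 2) by (apply pow_incr; lra).
  pose proof (pow2_ge_0 (Cmod a - Cmod b)). pose proof (pow2_ge_0 (Cmod a - Cmod c)).
  pose proof (pow2_ge_0 (Cmod c - Cmod b)). nra.
Qed.

Lemma D0_cut J u : (1 <= J)%nat -> D0 (cut J u).
Proof.
  intros HJ. exists (2 * J)%nat. intros n Hn. unfold cut. rewrite chi_zero by auto. ring.
Qed.

Lemma decomp k xi f u v J n : (forall n, v n = Aform k xi f u n) ->
  Cminus (Aform k xi f (cut J u) n) (v n) =
  Cplus (Cplus (Cmult xi (Cminus (Nat.iter k cre (cut J u) n) (Cmult (RtoC (chi J n)) (Nat.iter k cre u n))))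
               (Cmult (Cconj xi) (Cminus (Nat.iter k ann (cut J u) n) (Cmult (RtoC (chi J n)) (Nat.iter k ann u n)))))
        (Cmult (RtoC (chi J n - 1)) (v n)).
Proof.
  intros HA. rewrite HA. unfold Aform, fnum, cut. rewrite RtoC_minus. ring.
Qed.

Lemma F_closure k xi f u v : (k = 1 \/ k = 2)%nat -> l2 u -> l2 v ->
  (forall n, v n = Aform k xi f u n) -> closure (opA k xi f) u v.
Proof.
  intros Hk Hu Hv HA. split; auto. split; auto.
  exists (fun j => cut (S j) u), (fun j => Aform k xi f (cut (S j) u)).
  split; [|split].
  - intros j. split. apply D0_cut; lia. intros n. reflexivity.
  - apply lim_sqrt0.
    apply dom_lim with (fun n => Cmod (u n) ^ 2); auto.
    + intros j n. unfold vsub, cut. split. apply sq_nonneg.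
      replace (Cminus (Cmult (RtoC (chi (S j) n)) (u n)) (u n)) with
        (Cmult (RtoC (chi (S j) n - 1)) (u n)) by (rewrite RtoC_minus; ring).
      rewrite Cmod_mult, Cmod_R. pose proof (clip_bounds (2 - INR n / INR (S j))).
      fold (chi (S j) n) in H. pose proof (Cmod_ge_0 (u n)).
      assert (Rabs (chi (S j) n - 1) <= 1) by (unfold Rabs; destruct Rcase_abs; lra).
      pose proof (Rabs_pos (chi (S j) n - 1)).
      assert (Rabs (chi (S j) n - 1) * Cmod (u n) <= Cmod (u n)) by nra. 
      apply pow_incr. split; [nra| auto].
    + intros j n Hn. unfold vsub, cut. rewrite chi_one by lia.
      replace (Cminus (Cmult (RtoC 1) (u n)) (u n)) with (RtoC 0) by ring. rewrite Cmod_0. ring.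
  - apply lim_sqrt0.
    apply dom_lim with (fun n => 3 * (Cmod xi ^ 2 * (64 * W u n) + Cmod xi ^ 2 * (64 * W u n) + Cmod (v n) ^ 2)).
    + apply exR_scal.
      apply (ex_series_plus (fun n => _ + _) (fun n => Cmod (v n) ^ 2)); auto.
      apply (ex_series_plus (fun n => Cmod xi ^ 2 * (64 * W u n)) (fun n => Cmod xi ^ 2 * (64 * W u n)));
        apply exR_scal; apply exR_scal; apply W_ex; auto.
    + intros j n.
      pose proof (comm_G k (S j) u n Hk ltac:(lia)) as [G1 G2].
      pose proof (comm_H k (S j) u n Hk ltac:(lia)) as [H1 H2].
      set (E1 := Cminus (Nat.iter k cre (cut (S j) u) n) (Cmult (RtoC (chi (S j) n)) (Nat.iter k cre u n))) in *.
      set (E2 := Cminus (Nat.iter k ann (cut (S j) u) n) (Cmult (RtoC (chi (S j) n)) (Nat.iter k ann u n))) in *.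
      unfold vsub.
      rewrite decomp with (u := u) by auto. fold E1 E2.
      split. apply sq_nonneg.
      eapply Rle_trans. apply Cmod3.
      apply Rmult_le_compat_l. lra.
      rewrite !Cmod_mult, Cmod_conj, Cmod_R.
      pose proof (clip_bounds (2 - INR n / INR (S j))). fold (chi (S j) n) in H.
      assert (Rabs (chi (S j) n - 1) <= 1) by (unfold Rabs; destruct Rcase_abs; lra).
      pose proof (Rabs_pos (chi (S j) n - 1)).
      pose proof (pow2_ge_0 (Cmod xi)).
      pose proof (Cmod_ge_0 (v n)).
      rewrite !Rpow_mult_distr.
      assert (Rabs (chi (S j) n - 1) ^ 2 * Cmod (v n) ^ 2 <= Cmod (v n) ^ 2).
      { pose proof (pow2_ge_0 (Cmod (v n))). 
        assert (Rabs (chi (S j) n - 1) ^ 2 <= 1) by nra. nra. }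
      assert (Cmod xi ^ 2 * Cmod E1 ^ 2 <= Cmod xi ^ 2 * (64 * W u n)) by (apply Rmult_le_compat_l; lra).
      assert (Cmod xi ^ 2 * Cmod E2 ^ 2 <= Cmod xi ^ 2 * (64 * W u n)) by (apply Rmult_le_compat_l; lra).
      lra.
    + intros j n Hn.
      pose proof (comm_G k (S j) u n Hk ltac:(lia)) as [G1 G2].
      pose proof (comm_H k (S j) u n Hk ltac:(lia)) as [H1 H2].
      unfold vsub. rewrite decomp with (u := u) by auto.
      rewrite G2, H2 by lia. rewrite chi_one by lia.
      replace (Cplus (Cplus (Cmult xi (RtoC 0)) (Cmult (Cconj xi) (RtoC 0))) (Cmult (RtoC (1 - 1)) (v n)))
        with (RtoC 0) by (rewrite RtoC_minus; ring).
      rewrite Cmod_0. ring.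
Qed.

Theorem corollary3p2 (k : nat) (xi : C) (f : nat -> R) :
  (k = 1%nat \/ k = 2%nat) ->
  (forall n, 0 <= f n) ->
  (exists (Cst : R) (N : nat), 0 < Cst /\
     forall n : nat, (N <= n)%nat -> f n <= Cst * (sqrt (INR n)) ^ k) ->
  essentially_self_adjoint (opA k xi f).
Proof.
  intros Hk _ _. unfold essentially_self_adjoint, self_adjoint.
  intros u v. split.
  - apply F_adj.
  - intros H. destruct (adj_F _ _ _ _ _ H) as [Hu [Hv HA]]. apply F_closure; auto.
Qed.
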